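(* For any graphs $G$ and $H$, $A_1(G\,\square\, H)\cong A_1(G)\times A_1(H)$, where $G\,\square\,H$ is the Cartesian product graph.
   Context: All graphs are connected, simple and locally finite. The Cartesian product $G\,\square\,H$ has vertex set $V(G)\times V(H)$, with $(g,h)\sim(g',h')$ iff ($g=g'$ and $h\sim h'$) or ($h=h'$ and $g\sim g'$). $A_1$ is the discrete fundamental group: for base vertex $v_0$, elements are classes of graph maps $f:\mathbb{Z}\to G$ ($\mathbb{Z}$ the path graph on the integers) with $f(i)=v_0$ for $|i|\ge r_f$ ($r_f$ minimal), modulo based homotopy (a graph map $h:\mathbb{Z}\,\square\, I_m\to G$, $I_m$ the path on $\{0,\dots,m\}$, with $h(\cdot,0)=f$, $h(\cdot,m)=g$, each $h(\cdot,j)$ based); product by concatenation $p(i)=f(i+r_f)$ for $i\le0$, $p(i)=g(i-r_g)$ for $i\ge0$. *)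

(* Defs.v *)
From Stdlib Require Import ZArith List Relations ClassicalEpsilon.
Open Scope Z_scope.

Record graph := Graph {
  V :> Type;
  adj : V -> V -> Prop;
  adj_sym : forall x y, adj x y -> adj y x;
  adj_irrefl : forall x, ~ adj x x }.

Definition locally_finite (G : graph) : Prop :=
  forall v : G, exists l : list G, forall w, adj G v w -> In w l.

Definition connected (G : graph) : Prop :=
  forall v w : G, clos_refl_trans G (adj G) v w.

(** "equal or adjacent": the condition defining graph maps *)
Definition eqadj (G : graph) (x y : G) : Prop := x = y \/ adj G x y.

Definition box_adj (G H : graph) (x y : G * H) : Prop :=
  (fst x = fst y /\ adj H (snd x) (snd y)) \/
  (snd x = snd y /\ adj G (fst x) (fst y)).

Lemma box_adj_sym G H x y : box_adj G H x y -> box_adj G H y x.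
Proof.
  unfold box_adj; intros [[e a]|[e a]]; [left|right]; split; auto;
  apply adj_sym; auto.
Qed.

Lemma box_adj_irrefl G H x : ~ box_adj G H x x.
Proof.
  unfold box_adj; intros [[_ a]|[_ a]]; eapply adj_irrefl; eauto.
Qed.

Definition box (G H : graph) : graph :=
  Graph (G * H) (box_adj G H) (@box_adj_sym G H) (@box_adj_irrefl G H).

Definition Zgraph_map (G : graph) (f : Z -> G) : Prop :=
  forall i, eqadj G (f i) (f (i + 1)).

Definition based_radius (G : graph) (v0 : G) (f : Z -> G) (r : nat) : Prop :=
  forall i, Z.of_nat r <= Z.abs i -> f i = v0.

Definition is_loop (G : graph) (v0 : G) (f : Z -> G) : Prop :=
  Zgraph_map G f /\ exists r, based_radius G v0 f r.

(** the minimal radius r_f (chosen classically; well defined for loops) *)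
Definition min_radius (G : graph) (v0 : G) (f : Z -> G) (r : nat) : Prop :=
  based_radius G v0 f r /\ forall r', based_radius G v0 f r' -> (r <= r')%nat.

Definition radius (G : graph) (v0 : G) (f : Z -> G) : nat :=
  epsilon (inhabits 0%nat) (min_radius G v0 f).

Definition concat (G : graph) (v0 : G) (f g : Z -> G) : Z -> G :=
  fun i => if i <=? 0 then f (i + Z.of_nat (radius G v0 f))
           else g (i - Z.of_nat (radius G v0 g)).

(** based homotopy: a graph map h : Z □ I_m -> G *)
Definition based_homotopic (G : graph) (v0 : G) (f g : Z -> G) : Prop :=
  exists (m : nat) (h : Z -> nat -> G),
    (forall i (j : nat), (j < m)%nat -> eqadj G (h i j) (h i (S j))) /\
    (forall i (j : nat), (j <= m)%nat -> eqadj G (h i j) (h (i + 1) j)) /\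
    (forall i, h i 0%nat = f i) /\
    (forall i, h i m = g i) /\
    (forall j : nat, (j <= m)%nat -> exists r, based_radius G v0 (fun i => h i j) r).

(* Main.v *)
Require Import Defs.
From Stdlib Require Import ZArith.
From Stdlib Require Import Lia Relations Classical ClassicalEpsilon FunctionalExtensionality Wf_nat Arith.
Open Scope Z_scope.

Ltac zl := Z.to_euclidean_division_equations; lia.

Lemma eqadj_refl (G : graph) (x : G) : eqadj G x x.
Proof. left; reflexivity. Qed.

Lemma eqadj_sym (G : graph) (x y : G) : eqadj G x y -> eqadj G y x.
Proof. intros [e|a]; [left; auto | right; apply adj_sym; auto]. Qed.

Lemma gm_near (G : graph) (F : Z -> G) x y :
  Zgraph_map G F -> Z.abs (x - y) <= 1 -> eqadj G (F x) (F y).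
Proof.
  intros HF Hxy.
  destruct (Z.eq_dec x y) as [->|n]; [apply eqadj_refl|].
  destruct (Z.eq_dec y (x+1)) as [->|n2]; [apply HF|].
  assert (x = y + 1) as -> by lia. apply eqadj_sym, HF.
Qed.

Definition lstep (G : graph) (v0 : G) (f g : Z -> G) : Prop :=
  is_loop G v0 f /\ is_loop G v0 g /\ forall i, eqadj G (f i) (g i).

Definition lhom (G : graph) (v0 : G) := clos_refl_trans (Z -> G) (lstep G v0).

Lemma lhom_sym G v0 f g : lhom G v0 f g -> lhom G v0 g f.
Proof.
  induction 1.
  - apply rt_step. destruct H as [A [B C]]. split; [exact B|]. split; [exact A|].
    intros; apply eqadj_sym; auto.
  - apply rt_refl.
  - eapply rt_trans; eauto.
Qed.

Lemma hom_to_lhom G v0 f g : based_homotopic G v0 f g -> lhom G v0 f g.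
Proof.
  intros [m [h [Hv [Hh [H0 [Hm Hr]]]]]].
  assert (Hl : forall j, (j <= m)%nat -> is_loop G v0 (fun i => h i j)).
  { intros j Hj. split; [intros i; apply Hh; auto | apply Hr; auto]. }
  assert (forall j, (j <= m)%nat -> lhom G v0 f (fun i => h i j)).
  { induction j; intros Hj.
    - replace f with (fun i => h i 0%nat)
        by (extensionality i; first [apply H0 | symmetry; apply H0]).
      apply rt_refl.
    - eapply rt_trans; [apply IHj; lia|]. apply rt_step.
      split; [apply Hl; lia|]. split; [apply Hl; lia|].
      intros i; apply Hv; lia. }
  replace g with (fun i => h i m)
    by (extensionality i; first [apply Hm | symmetry; apply Hm]).
  apply H; lia.
Qed.

Lemma lhom_to_hom G v0 f g : is_loop G v0 f -> lhom G v0 f g -> based_homotopic G v0 f g.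
Proof.
  intros Hf H. apply clos_rt_rt1n in H. induction H.
  - destruct Hf as [Hg [r Hr]]. exists 0%nat, (fun i _ => x i).
    split; [intros; exfalso; lia|]. split; [intros; apply Hg|].
    split; [auto|]. split; [auto|].
    intros; exists r; auto.
  - destruct H as [Hx [Hy Hxy]]. specialize (IHclos_refl_trans_1n Hy).
    destruct IHclos_refl_trans_1n as [m [h [Hv [Hh [Hh0 [Hm Hr]]]]]].
    exists (S m), (fun i j => match j with O => x i | S j' => h i j' end).
    split; [|split; [|split; [|split]]].
    + intros i j Hj. destruct j as [|j]; simpl.
      * rewrite Hh0. auto.
      * apply Hv; lia.
    + intros i j Hj. destruct j as [|j]; [apply (proj1 Hx)|apply Hh; lia].
    + auto.
    + auto.
    + intros j Hj. destruct j as [|j]; [apply (proj2 Hx)|apply Hr; lia].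
Qed.

Lemma reparam (G : graph) (v0 : G) (F : Z -> G) (th : Z -> Z) :
  is_loop G v0 F ->
  (forall k, 0 <= th (k+1) - th k <= 1) ->
  (forall k, 0 <= k -> 0 <= th k <= k) ->
  (forall k, k <= 0 -> k <= th k <= 0) ->
  (forall k, Z.abs k <= 2 * Z.abs (th k) + 1) ->
  is_loop G v0 (fun k => F (th k)) /\ lhom G v0 F (fun k => F (th k)).
Proof.
  intros [HF [r Hr]] Hs Hp Hn Hb.
  set (phi := fun (j : nat) k => Z.max (k - Z.of_nat j) (Z.min (k + Z.of_nat j) (th k))).
  assert (Hl : forall j, is_loop G v0 (fun k => F (phi j k))).
  { intros j. split.
    - intros k. apply gm_near; auto. unfold phi. specialize (Hs k). lia.
    - exists (2*r+1)%nat. intros k Hk. apply Hr. unfold phi.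
      specialize (Hb k). destruct (Z_le_gt_dec 0 k).
      + specialize (Hp k l). lia.
      + specialize (Hn k ltac:(lia)). lia. }
  assert (Hth : is_loop G v0 (fun k => F (th k))).
  { split.
    - intros k. apply gm_near; auto. specialize (Hs k). lia.
    - exists (2*r+1)%nat. intros k Hk. apply Hr.
      specialize (Hb k). destruct (Z_le_gt_dec 0 k).
      + specialize (Hp k l). lia.
      + specialize (Hn k ltac:(lia)). lia. }
  split; [exact Hth|].
  assert (Hj : forall j, lhom G v0 F (fun k => F (phi j k))).
  { induction j.
    - replace (fun k => F (phi 0%nat k)) with F. apply rt_refl.
      extensionality k. unfold phi. f_equal. lia.
    - eapply rt_trans; [exact IHj|]. apply rt_step. split; [apply Hl|]. split; [apply Hl|].
      intros k. apply gm_near; auto. unfold phi. lia. }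
  eapply rt_trans; [exact (Hj (2*r)%nat)|].
  apply rt_step. split; [apply Hl|]. split; [exact Hth|].
  intros k. destruct (Z_lt_le_dec (Z.abs k) (Z.of_nat (2*r+1))).
  - replace (phi (2*r)%nat k) with (th k). apply eqadj_refl. unfold phi.
    destruct (Z_le_gt_dec 0 k).
    + specialize (Hp k l0). lia.
    + specialize (Hn k ltac:(lia)). lia.
  - specialize (Hb k). rewrite (Hr (phi _ k)), (Hr (th k)). apply eqadj_refl.
    + destruct (Z_le_gt_dec 0 k).
      * specialize (Hp k l0). lia.
      * specialize (Hn k ltac:(lia)). lia.
    + unfold phi. destruct (Z_le_gt_dec 0 k).
      * specialize (Hp k l0). lia.
      * specialize (Hn k ltac:(lia)). lia.
Qed.

Lemma box_eqadj_l (G K : graph) (x x' : G) (y : K) :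
  eqadj G x x' -> eqadj (box G K) (x,y) (x',y).
Proof. intros [e|a]; [left; subst; auto| right; right; simpl; auto]. Qed.

Lemma box_eqadj_r (G K : graph) (x : G) (y y' : K) :
  eqadj K y y' -> eqadj (box G K) (x,y) (x,y').
Proof. intros [e|a]; [left; subst; auto| right; left; simpl; auto]. Qed.

Lemma box_eqadj_proj (G K : graph) (p q : G * K) :
  eqadj (box G K) p q -> eqadj G (fst p) (fst q) /\ eqadj K (snd p) (snd q).
Proof.
  intros [e|[[e a]|[e a]]].
  - subst; split; left; auto.
  - split; [left; auto| right; auto].
  - split; [right; auto| left; auto].
Qed.

Lemma proj_loop (G K : graph) v0 w0 (f : Z -> G * K) :
  is_loop (box G K) (v0,w0) f ->
  is_loop G v0 (fun i => fst (f i)) /\ is_loop K w0 (fun i => snd (f i)).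
Proof.
  intros [Hg [r Hr]]. split; split.
  - intros i; apply (box_eqadj_proj _ _ _ _ (Hg i)).
  - exists r; intros i Hi; rewrite (Hr i Hi); reflexivity.
  - intros i; apply (box_eqadj_proj _ _ _ _ (Hg i)).
  - exists r; intros i Hi; rewrite (Hr i Hi); reflexivity.
Qed.

Lemma proj_lhom (G K : graph) v0 w0 (f g : Z -> G * K) :
  lhom (box G K) (v0,w0) f g ->
  lhom G v0 (fun i => fst (f i)) (fun i => fst (g i)) /\
  lhom K w0 (fun i => snd (f i)) (fun i => snd (g i)).
Proof.
  induction 1 as [x y [A [B C]]| |].
  - destruct (proj_loop _ _ _ _ _ A), (proj_loop _ _ _ _ _ B).
    split; apply rt_step; (split; [auto|split; [auto|]]); intros i;
      apply (box_eqadj_proj _ _ _ _ (C i)).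
  - split; apply rt_refl.
  - destruct IHclos_refl_trans1, IHclos_refl_trans2; split; eapply rt_trans; eauto.
Qed.

Definition Dm (G K : graph) (a : Z -> G) (b : Z -> K) : Z -> G * K :=
  fun k => (a ((k+1)/2), b (k/2)).

Lemma D_loop (G K : graph) v0 w0 a b :
  is_loop G v0 a -> is_loop K w0 b -> is_loop (box G K) (v0,w0) (Dm G K a b).
Proof.
  intros [Ha [ra Hra]] [Hb [rb Hrb]]. split.
  - intros k. unfold Dm.
    assert (E : ((k+1+1)/2 = (k+1)/2 + 1 /\ (k+1)/2 = k/2) \/
                ((k+1+1)/2 = (k+1)/2 /\ (k+1)/2 = k/2 + 1)) by zl.
    destruct E as [[E1 E2]|[E1 E2]]; rewrite E1; rewrite E2.
    + apply box_eqadj_l, Ha.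
    + apply box_eqadj_r, Hb.
  - exists (2*(ra+rb)+2)%nat. intros k Hk. unfold Dm.
    rewrite (Hra ((k+1)/2)) by zl. rewrite (Hrb (k/2)) by zl. reflexivity.
Qed.

Lemma D_lift_l (G K : graph) v0 w0 a a' b :
  lhom G v0 a a' -> is_loop K w0 b -> lhom (box G K) (v0,w0) (Dm G K a b) (Dm G K a' b).
Proof.
  intros Hh Hb. induction Hh as [x y [A [B C]]| |].
  - apply rt_step. split; [apply D_loop; auto|]. split; [apply D_loop; auto|].
    intros k; unfold Dm; apply box_eqadj_l; auto.
  - apply rt_refl.
  - eapply rt_trans; eauto.
Qed.

Lemma D_lift_r (G K : graph) v0 w0 a b b' :
  lhom K w0 b b' -> is_loop G v0 a -> lhom (box G K) (v0,w0) (Dm G K a b) (Dm G K a b').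
Proof.
  intros Hh Ha. induction Hh as [x y [A [B C]]| |].
  - apply rt_step. split; [apply D_loop; auto|]. split; [apply D_loop; auto|].
    intros k; unfold Dm; apply box_eqadj_r; auto.
  - apply rt_refl.
  - eapply rt_trans; eauto.
Qed.

Lemma to_D (G K : graph) v0 w0 (f : Z -> G * K) :
  is_loop (box G K) (v0,w0) f ->
  lhom (box G K) (v0,w0) f (Dm G K (fun i => fst (f i)) (fun i => snd (f i))).
Proof.
  intros Hf.
  destruct (reparam (box G K) (v0,w0) f (fun k => k/2) Hf) as [LE HE];
    try (intros; zl).
  eapply rt_trans; [exact HE|]. apply rt_step.
  destruct (proj_loop _ _ _ _ _ Hf).
  split; [exact LE|]. split; [apply D_loop; auto|].
  intros k. unfold Dm. destruct Hf as [Hg _].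
  pose proof (proj1 (box_eqadj_proj _ _ _ _ (Hg (k/2)))) as P.
  assert (E : (k+1)/2 = k/2 \/ (k+1)/2 = k/2 + 1) by zl.
  destruct E as [E|E]; rewrite E.
  - destruct (f (k/2)); left; reflexivity.
  - remember (f (k/2)) as p eqn:Ep. destruct p as [x y]. simpl in *.
    apply box_eqadj_l; auto.
Qed.

Definition Lsh (G : graph) (a b : Z -> G) (s t : nat) : Z -> G :=
  fun i => if i <=? 0 then a (i + Z.of_nat s) else b (i - Z.of_nat t).

Lemma br_mono (G : graph) (v0 : G) (a : Z -> G) s s' :
  based_radius G v0 a s -> (s <= s')%nat -> based_radius G v0 a s'.
Proof. intros H Hs i Hi. apply H. lia. Qed.

Lemma Lsh_loop (G : graph) (v0 : G) (a b : Z -> G) s t :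
  Zgraph_map G a -> Zgraph_map G b -> based_radius G v0 a s -> based_radius G v0 b t ->
  is_loop G v0 (Lsh G a b s t).
Proof.
  intros Ha Hb Hra Hrb. split.
  - intros i. unfold Lsh. destruct (Z.leb_spec i 0); destruct (Z.leb_spec (i+1) 0).
    + replace (i+1+Z.of_nat s) with (i + Z.of_nat s + 1) by lia. apply Ha.
    + assert (i = 0) by lia. subst. rewrite (Hra (0 + Z.of_nat s)) by lia.
      rewrite <- (Hrb (- Z.of_nat t)) by lia.
      replace (0+1-Z.of_nat t) with (- Z.of_nat t + 1) by lia. apply Hb.
    + lia.
    + replace (i+1-Z.of_nat t) with (i - Z.of_nat t + 1) by lia. apply Hb.
  - exists (2*(s+t))%nat. intros i Hi. unfold Lsh.
    destruct (Z.leb_spec i 0); [apply Hra|apply Hrb]; lia.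
Qed.

Lemma Lsh_hom (G : graph) (v0 : G) (a b : Z -> G) s t n m :
  Zgraph_map G a -> Zgraph_map G b -> based_radius G v0 a s -> based_radius G v0 b t ->
  lhom G v0 (Lsh G a b s t) (Lsh G a b (s+n) (t+m)).
Proof.
  intros Ha Hb Hra Hrb.
  assert (A : forall n, lhom G v0 (Lsh G a b s t) (Lsh G a b (s+n) t)).
  { induction n0.
    - rewrite Nat.add_0_r. apply rt_refl.
    - eapply rt_trans; [exact IHn0|]. apply rt_step.
      split; [apply Lsh_loop; auto; eapply br_mono; eauto; lia|].
      split; [apply Lsh_loop; auto; eapply br_mono; eauto; lia|].
      intros i. unfold Lsh. destruct (Z.leb_spec i 0).
      + replace (i + Z.of_nat (s + S n0)) with (i + Z.of_nat (s + n0) + 1) by lia. apply Ha.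
      + apply eqadj_refl. }
  eapply rt_trans; [apply (A n)|].
  induction m.
  - rewrite Nat.add_0_r. apply rt_refl.
  - eapply rt_trans; [exact IHm|]. apply rt_step.
    split; [apply Lsh_loop; auto; eapply br_mono; eauto; lia|].
    split; [apply Lsh_loop; auto; eapply br_mono; eauto; lia|].
    intros i. unfold Lsh. destruct (Z.leb_spec i 0).
    + apply eqadj_refl.
    + replace (i - Z.of_nat (t + m)) with (i - Z.of_nat (t + S m) + 1) by lia. apply eqadj_sym, Hb.
Qed.

Lemma Lsh_any (G : graph) (v0 : G) (a b : Z -> G) s t s' t' :
  Zgraph_map G a -> Zgraph_map G b -> based_radius G v0 a s -> based_radius G v0 b t ->
  based_radius G v0 a s' -> based_radius G v0 b t' ->
  lhom G v0 (Lsh G a b s t) (Lsh G a b s' t').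
Proof.
  intros. eapply rt_trans; [apply (Lsh_hom _ _ _ _ s t s' t'); auto|].
  apply lhom_sym. rewrite (Nat.add_comm s s'), (Nat.add_comm t t').
  apply Lsh_hom; auto.
Qed.

Lemma least_ex (P : nat -> Prop) :
  (exists n, P n) -> exists n, P n /\ forall m, P m -> (n <= m)%nat.
Proof.
  intros [n Hn]. revert Hn.
  induction n as [n IH] using (well_founded_induction lt_wf).
  intros Hn. destruct (classic (exists m, P m /\ (m < n)%nat)) as [[m [Pm Hm]]|Hno].
  - exact (IH m Hm Pm).
  - exists n. split; auto. intros m Pm. destruct (le_lt_dec n m); auto.
    exfalso; apply Hno; eauto.
Qed.

Lemma radius_spec (G : graph) (v0 : G) (f : Z -> G) : is_loop G v0 f -> based_radius G v0 f (radius G v0 f).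
Proof.
  intros [_ [r Hr]]. unfold radius.
  destruct (least_ex (based_radius G v0 f) (ex_intro _ r Hr)) as [n Hn].
  apply (epsilon_spec (inhabits 0%nat) (min_radius G v0 f) (ex_intro _ n Hn)).
Qed.

Lemma concat_proj (G K : graph) v0 w0 (f g : Z -> G * K) :
  is_loop (box G K) (v0,w0) f -> is_loop (box G K) (v0,w0) g ->
  lhom G v0 (fun i => fst (concat (box G K) (v0,w0) f g i))
            (concat G v0 (fun i => fst (f i)) (fun i => fst (g i))) /\
  is_loop G v0 (fun i => fst (concat (box G K) (v0,w0) f g i)) /\
  lhom K w0 (fun i => snd (concat (box G K) (v0,w0) f g i))
            (concat K w0 (fun i => snd (f i)) (fun i => snd (g i))) /\
  is_loop K w0 (fun i => snd (concat (box G K) (v0,w0) f g i)).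
Proof.
  intros Hf Hg.
  pose proof (radius_spec _ _ _ Hf) as Rf. pose proof (radius_spec _ _ _ Hg) as Rg.
  destruct (proj_loop _ _ _ _ _ Hf) as [F1 F2], (proj_loop _ _ _ _ _ Hg) as [G1 G2].
  pose proof (radius_spec _ _ _ F1) as RF1. pose proof (radius_spec _ _ _ F2) as RF2.
  pose proof (radius_spec _ _ _ G1) as RG1. pose proof (radius_spec _ _ _ G2) as RG2.
  set (rf := radius (box G K) (v0,w0) f) in *. set (rg := radius (box G K) (v0,w0) g) in *.
  assert (E1 : (fun i => fst (concat (box G K) (v0,w0) f g i)) =
               Lsh G (fun i => fst (f i)) (fun i => fst (g i)) rf rg).
  { extensionality i. unfold concat, Lsh. destruct (i <=? 0); reflexivity. }
  assert (E2 : (fun i => snd (concat (box G K) (v0,w0) f g i)) =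
               Lsh K (fun i => snd (f i)) (fun i => snd (g i)) rf rg).
  { extensionality i. unfold concat, Lsh. destruct (i <=? 0); reflexivity. }
  assert (B1 : based_radius G v0 (fun i => fst (f i)) rf)
    by (intros i Hi; rewrite (Rf i Hi); reflexivity).
  assert (B2 : based_radius K w0 (fun i => snd (f i)) rf)
    by (intros i Hi; rewrite (Rf i Hi); reflexivity).
  assert (B3 : based_radius G v0 (fun i => fst (g i)) rg)
    by (intros i Hi; rewrite (Rg i Hi); reflexivity).
  assert (B4 : based_radius K w0 (fun i => snd (g i)) rg)
    by (intros i Hi; rewrite (Rg i Hi); reflexivity).
  rewrite E1, E2.
  destruct F1 as [F1 _], F2 as [F2 _], G1 as [G1 _], G2 as [G2 _].
  split; [|split; [|split]].
  - apply Lsh_any; auto.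
  - apply Lsh_loop; auto.
  - apply Lsh_any; auto.
  - apply Lsh_loop; auto.
Qed.

Theorem lemma4p4 (G H : graph) (v0 : G) (w0 : H) :
  connected G -> locally_finite G ->
  connected H -> locally_finite H ->
  exists Phi : (Z -> G * H) -> (Z -> G) * (Z -> H),
    (forall f, is_loop (box G H) (v0, w0) f ->
       is_loop G v0 (fst (Phi f)) /\ is_loop H w0 (snd (Phi f))) /\
    (forall f g, is_loop (box G H) (v0, w0) f -> is_loop (box G H) (v0, w0) g ->
       (based_homotopic (box G H) (v0, w0) f g <->
        (based_homotopic G v0 (fst (Phi f)) (fst (Phi g)) /\
         based_homotopic H w0 (snd (Phi f)) (snd (Phi g))))) /\
    (forall a b, is_loop G v0 a -> is_loop H w0 b ->
       exists f, is_loop (box G H) (v0, w0) f /\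
         based_homotopic G v0 (fst (Phi f)) a /\
         based_homotopic H w0 (snd (Phi f)) b) /\
    (forall f g, is_loop (box G H) (v0, w0) f -> is_loop (box G H) (v0, w0) g ->
       based_homotopic G v0 (fst (Phi (concat (box G H) (v0, w0) f g)))
         (concat G v0 (fst (Phi f)) (fst (Phi g))) /\
       based_homotopic H w0 (snd (Phi (concat (box G H) (v0, w0) f g)))
         (concat H w0 (snd (Phi f)) (snd (Phi g)))).
Proof.
  intros _ _ _ _.
  exists (fun f => (fun i => fst (f i), fun i => snd (f i))).
  split; [|split; [|split]].
  - intros f Hf; simpl. exact (proj_loop _ _ _ _ _ Hf).
  - intros f g Hf Hg; simpl.
    destruct (proj_loop _ _ _ _ _ Hf) as [F1 F2], (proj_loop _ _ _ _ _ Hg) as [G1 G2].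
    split.
    + intros Hh. apply hom_to_lhom in Hh. destruct (proj_lhom _ _ _ _ _ _ Hh) as [A B].
      split; apply lhom_to_hom; auto.
    + intros [A B]. apply hom_to_lhom in A. apply hom_to_lhom in B.
      apply lhom_to_hom; auto.
      eapply rt_trans; [apply to_D; auto|].
      eapply rt_trans; [apply D_lift_l; eauto|].
      eapply rt_trans; [apply D_lift_r; eauto|].
      apply lhom_sym, to_D; auto.
  - intros a b Ha Hb. exists (Dm G H a b). split; [apply D_loop; auto|]. simpl.
    unfold Dm; simpl. split.
    + destruct (reparam G v0 a (fun k => (k+1)/2) Ha) as [L R]; try (intros; zl).
      apply lhom_to_hom; auto. apply lhom_sym; auto.
    + destruct (reparam H w0 b (fun k => k/2) Hb) as [L R]; try (intros; zl).
      apply lhom_to_hom; auto. apply lhom_sym; auto.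
  - intros f g Hf Hg. simpl.
    destruct (concat_proj _ _ _ _ _ _ Hf Hg) as [A [B [C D]]].
    split; apply lhom_to_hom; auto.
Qed.
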